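(* Let $1\le k\le n$, let $\lambda=(\lambda_1,\ldots,\lambda_k)$ with $n-k\ge\lambda_1\ge\cdots\ge\lambda_k\ge0$, set $\lambda_{k+1}=0$, and let $D_\lambda$ be the weighted digraph with sources $e_1,\ldots,e_k$ and sinks $v_1,\ldots,v_k$ described in the context. For integers $C_1,\ldots,C_k$ with $0\le C_i\le\lambda_i$, let $\mathbf P(C)=(p_{11},\ldots,p_{kk})$, where $p_{ii}$ is the unique path in $D_\lambda$ from $e_i$ to $v_i$ whose only diagonal edge is the diagonal edge of row $i$ with label $C_i$. Then: (i) the paths $p_{11},\ldots,p_{kk}$ are pairwise vertex-disjoint if and only if $C_1\ge C_2\ge\cdots\ge C_k$; (ii) if $C_1\ge\cdots\ge C_k$, so that $(C_1,\ldots,C_k)$ describes a Catalan path $C$ constrained by the Young diagram of shape $\lambda$ in the $k\times(n-k)$ rectangle, then $\mathrm{pwt}(C)=(1/\alpha)^{\,n-k-\lambda_1}\,\mathrm{wt}(\mathbf P(C))$, where $\mathrm{wt}(\mathbf P(C))=\prod_{i=1}^k\mathrm{wt}(p_{ii})$.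
   Context: Digraph $D_\lambda$: vertices are points $(x,r)\in\mathbb Z^2$. For each row $i\in\{1,\ldots,k\}$ (a row of $\lambda_i$ parallelograms between horizontal lines $r=i-1$ and $r=i$): top vertices $(x,i-1)$ for $0\le x\le\lambda_i$, bottom vertices $(x,i)$ for $1\le x\le\lambda_i+1$; horizontal edges $(x,i-1)\to(x+1,i-1)$ for $0\le x<\lambda_i$ and $(x,i)\to(x+1,i)$ for $1\le x\le\lambda_i$; diagonal (southeast) edges $(t,i-1)\to(t+1,i)$ for $0\le t\le\lambda_i$, the diagonal edge with this $t$ having label $t$. Coinciding vertices/edges of consecutive rows are identified. Sources $e_i=(0,i-1)$, sinks $v_i=(\lambda_i+1,i)$. Weights: a diagonal edge of label $0$ has weight $1/\beta$; a diagonal edge of row $i$ with label $t>\lambda_{i+1}$ has weight $(1/\alpha)^{t-\lambda_{i+1}}$; all other edges have weight $1$. The weight of a path is the product of its edge weights. Catalan path constrained by $Y$ (Young diagram of shape $\lambda$ in the $k\times(n-k)$ rectangle, NW-justified, rows numbered top to bottom, vertical grid lines labelled $0,\ldots,n-k$ left to right): a south/west unit-step lattice path from the NE to the SW corner of the rectangle never crossing the southeast border of $Y$; it is encoded by $C_1\ge\cdots\ge C_k\ge0$, $C_i\le\lambda_i$, where $C_i$ is the grid-line label of its south step in row $i$. Let $L$ be the lattice path from the NE to the SW corner following the southeast border of $Y$. Edge weights: a south step with $C_i=0$ (on the west border of the rectangle) has weight $1/\beta$, other south steps weight $1$; a west step lying on $L$ has weight $1/\alpha$, other west steps weight $1$.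 $\mathrm{pwt}(C)$ is the product of these edge weights. *)

(* Defs.v *)
From HB Require Import structures.
From mathcomp Require Import all_boot all_order all_algebra.
Set Implicit Arguments. Unset Strict Implicit. Unset Printing Implicit Defensive.
Import Order.TTheory GRing.Theory Num.Theory.

(* Conventions:
   - lam : seq nat of size k encodes lambda; lambda_i = nth 0 lam (i-1) for
     1 <= i <= k, and lambda_{k+1} = nth 0 lam k = 0 (the convention of the paper).
   - Vertices of D_lambda are points (x, r) of nat * nat (all coordinates are
     nonnegative).  Since vertices are just points, coinciding vertices/edges of
     consecutive rows are automatically identified.
   - Indices i range over 1..k. *)

Definition lamb (lam : seq nat) (i : nat) : nat := nth 0%N lam i.-1.

Definition vert := (nat * nat)%type.

Definition row_edge (lam : seq nat) (i : nat) (u w : vert) : bool :=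
  let l := lamb lam i in
  [|| [&& u.2 == i.-1, w.2 == i.-1, w.1 == u.1.+1 & (u.1 < l)%N],
      [&& u.2 == i, w.2 == i, w.1 == u.1.+1 & (1 <= u.1 <= l)%N]
    | [&& u.2 == i.-1, w.2 == i, w.1 == u.1.+1 & (u.1 <= l)%N]].

Definition edgeD (lam : seq nat) (u w : vert) : bool :=
  has (fun i => row_edge lam i u w) (iota 1 (size lam)).

Definition is_diag (e : vert * vert) : bool := e.2.2 == e.1.2.+1.

Definition src (i : nat) : vert := (0%N, i.-1).
Definition snk (lam : seq nat) (i : nat) : vert := ((lamb lam i).+1, i).

Definition diag_edge (i t : nat) : vert * vert := ((t, i.-1), (t.+1, i)).

Definition path_edges (p : seq vert) : seq (vert * vert) := zip p (behead p).

Definition is_dpath (lam : seq nat) (p : seq vert) (a b : vert) : bool :=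
  if p is x :: s then [&& x == a, path (edgeD lam) x s & last x s == b]
  else false.

Definition diag_edges (p : seq vert) : seq (vert * vert) :=
  [seq e <- path_edges p | is_diag e].

Local Open Scope ring_scope.

Definition edge_wt (R : fieldType) (alpha beta : R) (lam : seq nat)
    (e : vert * vert) : R :=
  if is_diag e then
    let t := e.1.1 in let i := e.2.2 in
    if t == 0%N then beta^-1
    else if (lamb lam i.+1 < t)%N then alpha^-1 ^+ (t - lamb lam i.+1)
    else 1
  else 1.

Definition path_wt (R : fieldType) (alpha beta : R) (lam : seq nat)
    (p : seq vert) : R :=
  \prod_(e <- path_edges p) edge_wt alpha beta lam e.

(* Grid points (x, y): x is the
   vertical grid-line label (0..n-k, left to right), y the horizontal grid line
   (0..k, top to bottom).
   A path is encoded by c : nat -> nat, c i being the label of its south step in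
   row i (1 <= i <= k); with the conventions c_0 = n-k, c_{k+1} = 0. *)
Definition cext (k top : nat) (c : nat -> nat) (i : nat) : nat :=
  if i == 0%N then top else if (i <= k)%N then c i else 0%N.

Definition west_steps (k top : nat) (c : nat -> nat) (i : nat) : seq (vert * vert) :=
  [seq ((x.+1, i), (x, i)) |
     x <- rev (iota (cext k top c i.+1) (cext k top c i - cext k top c i.+1))].

Definition south_step (k top : nat) (c : nat -> nat) (i : nat) : vert * vert :=
  ((cext k top c i, i.-1), (cext k top c i, i)).

(* all unit steps of the lattice path from NE corner (top,0) to SW corner (0,k) *)
Definition lattice_steps (k top : nat) (c : nat -> nat) : seq (vert * vert) :=
  west_steps k top c 0 ++
  flatten [seq south_step k top c i :: west_steps k top c i | i <- iota 1 k].

Definition is_south (s : vert * vert) : bool := s.1.1 == s.2.1.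

Definition border_steps (n : nat) (lam : seq nat) : seq (vert * vert) :=
  lattice_steps (size lam) (n - size lam) (lamb lam).

Definition step_wt (R : fieldType) (alpha beta : R) (n : nat) (lam : seq nat)
    (s : vert * vert) : R :=
  if is_south s then (if s.1.1 == 0%N then beta^-1 else 1)
  else if s \in border_steps n lam then alpha^-1 else 1.

Definition pwt (R : fieldType) (alpha beta : R) (n : nat) (lam : seq nat)
    (C : nat -> nat) : R :=
  \prod_(s <- lattice_steps (size lam) (n - size lam) C) step_wt alpha beta n lam s.

(* Main.v *)
Require Import Defs.
From mathcomp Require Import all_boot all_order all_algebra zify.
Import GRing.Theory.

Definition stp (u w : vert) : bool :=
  (w.1 == u.1.+1) && ((w.2 == u.2) || (w.2 == u.2.+1)).

Lemma edgeD_stp lam u w : edgeD lam u w -> stp u w.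
Proof.
case: u w => [u1 u2] [w1 w2].
move/hasP=> [i]; rewrite mem_iota => /andP[hi _].
rewrite /row_edge /stp /= => /or3P[/and4P[/eqP a /eqP b /eqP c _]|/and4P[/eqP a /eqP b /eqP c _]|/and4P[/eqP a /eqP b /eqP c _]]; lia.
Qed.

Lemma diag_cons x y s : diag_edges (x :: y :: s) =
  if is_diag (x, y) then (x, y) :: diag_edges (y :: s) else diag_edges (y :: s).
Proof. by rewrite /diag_edges /path_edges /=. Qed.

Lemma mem_nodiag s x : path stp x s -> diag_edges (x :: s) = [::] ->
  forall v, (v \in x :: s) = (v.2 == x.2) && (x.1 <= v.1 <= (last x s).1).
Proof.
elim: s x => [|y s IH] [x1 x2] /=.
  by move=> _ _ [v1 v2]; rewrite inE xpair_eqE /=; lia.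
move=> /andP[hxy hp]; rewrite diag_cons.
case: y hxy hp IH => [y1 y2] hxy hp IH.
rewrite /is_diag /=; move: hxy; rewrite /stp /= => /andP[/eqP e1 h2].
case: ifP => // hd2 hd [v1 v2].
have H := IH _ hp hd.
have hl := H (last (y1, y2) s); rewrite mem_last /= in hl.
rewrite in_cons H xpair_eqE /=.
move: hl h2 hd2; lia.
Qed.

Lemma mem_onediag s x t r : path stp x s ->
  diag_edges (x :: s) = [:: ((t, r), (t.+1, r.+1))] ->
  [/\ x.2 = r, x.1 <= t &
  forall v, (v \in x :: s) = ((v.2 == r) && (x.1 <= v.1 <= t)) ||
        ((v.2 == r.+1) && (t < v.1 <= (last x s).1))].
Proof.
elim: s x => [|y s IH] [x1 x2] /=.
  by [].
move=> /andP[hxy hp]; rewrite diag_cons.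
case: y hxy hp IH => [y1 y2] hxy hp IH.
rewrite /is_diag /=; move: hxy; rewrite /stp /= => /andP[/eqP e1 h2].
case: ifP => hd2 hd.
  case: hd => [ex1 ex2 ey1 ey2 hd]; subst.
  have H := mem_nodiag _ _ hp hd.
  have hl := H (last (t.+1, r.+1) s); rewrite mem_last /= in hl.
  split => // -[v1 v2].
  rewrite in_cons H xpair_eqE /=.
  move: hl; lia.
have [A B H] := IH _ hp hd.
simpl in A, B.
split; first by move: h2 hd2; lia.
  by lia.
move=> [v1 v2].
rewrite in_cons H xpair_eqE /=.
move: h2 hd2 A B; lia.
Qed.
Lemma mem_west_steps k top c j x i :
  (((x.+1,i),(x,i)) \in west_steps k top c j) =
  (i == j) && (cext k top c j.+1 <= x < cext k top c j).
Proof.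
rewrite /west_steps; apply/mapP/andP.
- case=> y; rewrite mem_rev mem_iota => hy [] e1 e2 e3 e4; subst.
  split => //; lia.
- case=> /eqP -> h; exists x => //; rewrite mem_rev mem_iota; lia.
Qed.

Lemma cext_big k top c j : k < j -> cext k top c j = 0.
Proof.
move=> h; rewrite /cext; case: (j == 0) /eqP => [e|_]; first lia.
by rewrite leqNgt h.
Qed.

Lemma mem_lattice k top c x i :
  (((x.+1,i),(x,i)) \in lattice_steps k top c) =
  (cext k top c i.+1 <= x < cext k top c i).
Proof.
rewrite /lattice_steps mem_cat mem_west_steps.
apply/idP/idP.
- case/orP => [/andP[/eqP -> //]|/flattenP [s /mapP [j hj ->]]].
  rewrite in_cons mem_west_steps => /orP [/eqP e|/andP[/eqP -> //]].
  by case: e => e1 e2 e3 e4; lia.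
- move=> h; case: i h => [|i] h; first by rewrite eqxx h.
  apply/orP; right; apply/flattenP.
  exists (south_step k top c i.+1 :: west_steps k top c i.+1).
    apply/mapP; exists i.+1 => //; rewrite mem_iota.
    have [hk|hk] := leqP i.+1 k; first lia.
    by move: h; rewrite (@cext_big k top c i.+1 hk); lia.
  by rewrite in_cons mem_west_steps eqxx h orbT.
Qed.

Lemma prod_if_count (R : fieldType) (T : Type) (P : pred T) (a : R) s :
  (\prod_(x <- s) (if P x then a else 1) = a ^+ count P s)%R.
Proof.
elim: s => [|y s IH]; first by rewrite big_nil.
rewrite big_cons IH /=; case: (P y); by rewrite ?exprS ?mul1r ?add0n ?add1n.
Qed.

Lemma count_iota a b m len :
  count (fun x => a <= x < b) (iota m len) = minn b (m + len) - maxn a m.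
Proof.
elim: len m => [|len IH] m /=; first lia.
rewrite IH.
have [h1|h1] := leqP a m; have [h2|h2] := ltnP m b; rewrite /= ?andbT ?andbF; lia.
Qed.

Theorem lemma2 (R : fieldType) (alpha beta : R) (n k : nat) (lam : seq nat)
    (C : nat -> nat) (P : nat -> seq vert) :
  alpha != 0%R -> beta != 0%R ->
  (1 <= k <= n)%N ->
  size lam = k ->
  (lamb lam 1 <= n - k)%N ->
  (forall i, (1 <= i < k)%N -> (lamb lam i.+1 <= lamb lam i)%N) ->
  (forall i, (1 <= i <= k)%N -> (C i <= lamb lam i)%N) ->
  (forall i, (1 <= i <= k)%N ->
     is_dpath lam (P i) (src i) (snk lam i) /\
     diag_edges (P i) = [:: diag_edge i (C i)]) ->
  ((forall i j, (1 <= i)%N -> (i < j <= k)%N ->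
      forall v, v \in P i -> v \notin P j)
   <-> (forall i, (1 <= i < k)%N -> (C i.+1 <= C i)%N))
  /\
  ((forall i, (1 <= i < k)%N -> (C i.+1 <= C i)%N) ->
   pwt alpha beta n lam C =
   (alpha^-1 ^+ (n - k - lamb lam 1) *
    \prod_(1 <= i < k.+1) path_wt alpha beta lam (P i))%R).
Proof.
move=> ha hb hk hsize hl1 hlam hC hP.
have memP : forall i, 1 <= i <= k -> forall v, (v \in P i) =
   ((v.2 == i.-1) && (v.1 <= C i)) || ((v.2 == i) && (C i < v.1 <= (lamb lam i).+1)).
  move=> i hi v; have [hd hg] := hP i hi; move: hd hg.
  case: (P i) => [|x s] //= /and3P[/eqP hx hp /eqP hl].
  rewrite /diag_edge; case: i hi hl hx => [|j] // hi hl hx /= hg.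
  have [A B H] := mem_onediag _ _ _ _ (sub_path (@edgeD_stp lam) hp) hg.
  by rewrite H hl hx /=; lia.
split.
  split.
    move=> hdis i hi; rewrite leqNgt; apply/negP => hlt.
    have := hdis i i.+1 ltac:(lia) ltac:(lia) ((C i).+1, i).
    have := hC i ltac:(lia).
    rewrite memP ?memP /=; try lia.
  move=> hmono i j hi /andP[hij hj] v.
  have hm := hmono i ltac:(lia).
  rewrite memP ?memP; try lia.
  case: (j =P i.+1) => [ej|ne]; first (subst j; move=> hv; move: hv hm; lia).
  move=> hv; move: hv; lia.
move=> hmono.
have pw : forall i, 1 <= i <= k -> path_wt alpha beta lam (P i) =
   edge_wt alpha beta lam (diag_edge i (C i)).
  move=> i hi; have [_ hg] := hP i hi.
  rewrite /path_wt (_ : (\prod_(e <- path_edges (P i)) _ = \prod_(e <- diag_edges (P i)) edge_wt alpha beta lam e)%R); first by rewrite hg big_seq1.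
  rewrite /diag_edges big_filter big_mkcond /=.
  rewrite [RHS]big_mkcond; by apply: eq_bigr => e _; rewrite /edge_wt; case: ifP.
have Lq : forall j, 1 <= j -> cext k (n-k) (lamb lam) j = lamb lam j.
  move=> j hj; rewrite /cext; case: (j == 0) /eqP => [e|_]; first lia.
  case: ifP => // hjk; rewrite /lamb nth_default // hsize; lia.
have cq : forall j, 1 <= j <= k -> cext k (n-k) C j = C j.
  move=> j hj; rewrite /cext; case: (j == 0) /eqP => [e|_]; first lia.
  by case: ifP => //; lia.
have hc1 : forall i, 1 <= i <= k ->
    cext k (n-k) C i.+1 <= C i /\ cext k (n-k) C i.+1 <= lamb lam i.+1.
  move=> i hi; have [hik|hik] := ltnP i k.
    rewrite cq; last lia.
    split; [apply: hmono; lia | apply: hC; lia].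
  by rewrite cext_big; last lia.
have Wrow : forall i, (\prod_(s <- west_steps k (n-k)%N C i) step_wt alpha beta n lam s)%R =
   (alpha^-1 ^+ (count (fun x => cext k (n-k) (lamb lam) i.+1 <= x < cext k (n-k) (lamb lam) i)
     (iota (cext k (n-k) C i.+1) (cext k (n-k) C i - cext k (n-k) C i.+1)))%N)%R.
  move=> i; rewrite /west_steps big_map -count_rev.
  rewrite -(@prod_if_count R nat (fun x => cext k (n-k) (lamb lam) i.+1 <= x < cext k (n-k) (lamb lam) i)).
  apply: eq_bigr => x _.
  rewrite /step_wt /is_south /= (_ : (x.+1 == x) = false); last lia.
  by rewrite /border_steps hsize mem_lattice.
rewrite /pwt hsize /lattice_steps big_cat big_flatten /= big_map Wrow.
rewrite count_iota (Lq 1) // /cext /= ifT; last lia.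
rewrite (_ : minn (n - k) (C 1 + (n - k - C 1)) - maxn (lamb lam 1) (C 1) = n - k - lamb lam 1);
  last by have := hC 1 ltac:(lia); lia.
congr (_ * _)%R.
rewrite /index_iota subSS subn0 big_seq [RHS]big_seq.
apply: eq_bigr => i; rewrite mem_iota => hi.
rewrite pw; last lia.
rewrite big_cons Wrow count_iota !Lq; try lia.
rewrite (cq i); last lia.
have [h1 h2] := hc1 i ltac:(lia).
have h3 := hC i ltac:(lia).
rewrite (_ : minn (lamb lam i) (cext k (n - k) C i.+1 + (C i - cext k (n - k) C i.+1))
   - maxn (lamb lam i.+1) (cext k (n - k) C i.+1) = C i - lamb lam i.+1); last lia.
rewrite /step_wt /south_step /is_south /= eqxx cq; last lia.
rewrite /edge_wt /diag_edge /is_diag /= (_ : i.-1.+1 = i); last lia.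
rewrite eqxx.
case: eqP => [->|_]; first by rewrite sub0n expr0 mulr1.
case: ifP => h; first by rewrite mul1r.
by rewrite (_ : C i - lamb lam i.+1 = 0); [rewrite expr0 mulr1 | lia].
Qed.
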